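(* For every graph $G$, $\operatorname{th}_{\operatorname{H}}(G)=|V(G)|$ if and only if $G$ contains none of $2K_2$, $K_2\cup\overline{K_2}$, $\overline{K_4}$ as an induced subgraph.
   Context: All graphs are finite, simple and undirected; $2K_2$ is two disjoint edges, $K_2\cup\overline{K_2}$ is an edge plus two isolated vertices, and $\overline{K_4}$ is four isolated vertices. Hopping color change rule: a blue vertex $v$ may force a white vertex $w$ to become blue if $v$ has not previously performed a force and every neighbor of $v$ is blue. For an initial blue set $B$, a chronological list of forces of $B$ is a sequence of such forces applied one at a time until no further force is possible; its underlying unordered set is a set of forces of $B$. $B$ is a hopping forcing set if some chronological list of forces of $B$ turns all vertices blue. For a set of forces $\mathcal F$ of $B$, let $\mathcal F^{(0)}=B$ and for $t\geq1$ let $\mathcal F^{(t)}$ be the set of vertices $w\notin U_{t-1}:=\bigcup_{i=0}^{t-1}\mathcal F^{(i)}$ for which there is $(v\to w)\in\mathcal F$ with $v\in U_{t-1}$ and all neighbors of $v$ in $U_{t-1}$. $\operatorname{pt}_{\operatorname{H}}(G;\mathcal F)$ is the least $t$ with $\bigcup_{i=0}^t\mathcal F^{(i)}=V(G)$ ($\infty$ if none); $\operatorname{pt}_{\operatorname{H}}(G;B)$ is the minimum over sets of forces $\mathcal F$ of $B$ ($\infty$ if $B$ is not a hopping forcing set). $\operatorname{th}_{\operatorname{H}}(G)=\min_{B\subseteq V(G)}\big(|B|+\operatorname{pt}_{\operatorname{H}}(G;B)\big)$. *)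

(* Defs.v *)
From mathcomp Require Import all_boot.
From Stdlib Require Import ClassicalEpsilon.
Set Implicit Arguments. Unset Strict Implicit. Unset Printing Implicit Defensive.

(* A finite simple graph: vertex type T : finType, adjacency e : rel T
   (symmetry/irreflexivity are hypotheses of the theorem). *)

Section Hopping.
Variables (T : finType) (e : rel T).

Definition can_force (blue used : {set T}) (v w : T) : bool :=
  [&& v \in blue, v \notin used, w \notin blue & [forall u, e v u ==> (u \in blue)]].

Fixpoint chron_list (blue used : {set T}) (s : seq (T * T)) : bool :=
  match s with
  | [::] => ~~ [exists v, exists w, can_force blue used v w]
  | (v, w) :: s' => can_force blue used v w && chron_list (w |: blue) (v |: used) s'
  end.

Definition is_chron_list (B : {set T}) (s : seq (T * T)) : bool := chron_list B set0 s.

Definition is_set_of_forces (B : {set T}) (F : {set T * T}) : Prop :=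
  exists s, is_chron_list B s /\ F = [set x in s].

Definition hopping_forcing_set (B : {set T}) : Prop :=
  exists s, is_chron_list B s /\ B :|: [set x.2 | x in s] = [set: T].

(* U B F t = \bigcup_{i=0}^t F^(i) *)
Fixpoint U (B : {set T}) (F : {set T * T}) (t : nat) : {set T} :=
  match t with
  | 0 => B
  | t'.+1 => let Ut := U B F t' in
      Ut :|: [set w | (w \notin Ut) &&
                [exists v, [&& (v, w) \in F, v \in Ut & [forall u, e v u ==> (u \in Ut)]]]]
  end.

(* k = |B| + t for some B, some set of forces F of B, and t with
   \bigcup_{i<=t} F^(i) = V.  The minimum of such k is
   min_B (|B| + min_F (least t ...)) = th_H(G). *)
Definition th_achievable (k : nat) : Prop :=
  exists (B : {set T}) (F : {set T * T}) (t : nat),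
    is_set_of_forces B F /\ U B F t = [set: T] /\ k = #|B| + t.

Definition th_achievableb (k : nat) : bool :=
  if excluded_middle_informative (th_achievable k) then true else false.

Lemma th_achievable_exists : exists k, th_achievableb k.
Proof.
exists (#|[set: T]| + 0); rewrite /th_achievableb.
case: excluded_middle_informative => // [[]].
exists [set: T], set0, 0; split; last by [].
exists [::]; split; last by apply/setP=> x; rewrite !inE.
rewrite /is_chron_list /=; apply/negP=> /existsP[v /existsP[w]].
by case/and4P=> _ _; rewrite inE.
Qed.

Definition th_H : nat := ex_minn th_achievable_exists.

Definition has_induced (H : rel 'I_4) : Prop :=
  exists f : 'I_4 -> T, injective f /\ forall x y, e (f x) (f y) = H x y.

End Hopping.

Definition twoK2 : rel 'I_4 := fun x y =>
  [|| (val x, val y) == (0, 1), (val x, val y) == (1, 0),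
      (val x, val y) == (2, 3) | (val x, val y) == (3, 2)].

Definition K2_coK2 : rel 'I_4 := fun x y =>
  ((val x, val y) == (0, 1)) || ((val x, val y) == (1, 0)).

Definition coK4 : rel 'I_4 := fun _ _ => false.

(* Main.v *)
Require Import Defs.
From mathcomp Require Import all_boot.
From Stdlib Require Import ClassicalEpsilon.
Set Implicit Arguments. Unset Strict Implicit. Unset Printing Implicit Defensive.

Lemma chron_fst (T : finType) (e : rel T) blue used s :
  chron_list e blue used s -> all (fun x => x.1 \notin used) s && uniq (map fst s).
Proof.
elim: s blue used => [|[v w] s IH] blue used //=.
case/andP => /and4P [_ Hv _ _] /IH /andP [Hall Hu].
have H1 : all (fun x => x.1 \notin used) s.
  apply/allP => x /(allP Hall); rewrite in_setU1 negb_or; by case/andP.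
have H2 : v \notin map fst s.
  apply/mapP => [[x Hx Ev]]; move: (allP Hall x Hx); by rewrite -Ev in_setU1 eqxx.
by rewrite Hv H1 H2 Hu.
Qed.

Lemma fst_uniq (A B : eqType) (s : seq (A * B)) v w1 w2 :
  uniq (map fst s) -> (v, w1) \in s -> (v, w2) \in s -> w1 = w2.
Proof.
elim: s => [|[a b] s IH] //=.
case/andP=> Ha Hu; rewrite !in_cons.
case/orP=> [/eqP[E1 E2]|H1]; case/orP=> [/eqP[E3 E4]|H2].
- by rewrite E2 E4.
- have := map_f fst H2; rewrite /= E1 => H; by rewrite H in Ha.
- have := map_f fst H1; rewrite /= E3 => H; by rewrite H in Ha.
- exact: IH.
Qed.

Definition badq (T : finType) (e : rel T) := exists a b c d : T,
  [/\ uniq [:: a; b; c; d], ~~ e a c, ~~ e a d, ~~ e b c & ~~ e b d].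

Lemma U_card (T : finType) (e : rel T) B F t :
  is_set_of_forces e B F -> ~ badq e -> #|U e B F t| <= #|B| + t.
Proof.
move=> [s [Hs ->]] Hbad.
have Hfu : forall v w1 w2, (v,w1) \in s -> (v,w2) \in s -> w1 = w2.
  move: (chron_fst Hs) => /andP [_ Hu] v w1 w2; exact: fst_uniq.
elim: t => [|t IH] /=; first by rewrite addn0.
set Ut := U e B _ t in IH *.
set N := [set w | _].
rewrite cardsU; apply: leq_trans (leq_subr _ _) _.
rewrite addnS -addn1 leq_add //.
rewrite leqNgt; apply/negP => /card_gt1P [w1 [w2 [Hw1 Hw2 Hne]]].
move: Hw1 Hw2; rewrite !inE => /andP [Hn1 /existsP [v1 /and3P [F1 V1 A1]]].
move=> /andP [Hn2 /existsP [v2 /and3P [F2 V2 A2]]].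
apply: Hbad; exists v1, v2, w1, w2.
have nvw : forall v w, v \in Ut -> w \notin Ut -> v != w.
  by move=> v w Hv Hw; apply/eqP => E; rewrite -E Hv in Hw.
have ne : forall v w, [forall u, e v u ==> (u \in Ut)] -> w \notin Ut -> ~~ e v w.
  move=> v w /forallP /(_ w) H Hw; apply/negP => Hvw.
  by move: H; rewrite Hvw /= (negbTE Hw).
have H12 : v1 != v2.
  apply/eqP => E; rewrite E in F1; rewrite !inE in F1 F2.
  by move: Hne; rewrite (Hfu _ _ _ F1 F2) eqxx.
rewrite /= !inE !negb_or H12 Hne !nvw //=; by split => //; apply: ne.
Qed.

Lemma achievableb_of (T : finType) (e : rel T) k : th_achievable e k -> th_achievableb e k.
Proof. by rewrite /th_achievableb; case: excluded_middle_informative. Qed.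

Lemma th_le (T : finType) (e : rel T) k : th_achievable e k -> th_H e <= k.
Proof.
move=> /achievableb_of H; rewrite /th_H.
by case: ex_minnP => m _ /(_ _ H).
Qed.

Lemma th_ach (T : finType) (e : rel T) : th_achievable e (th_H e).
Proof.
rewrite /th_H; case: ex_minnP => m; rewrite /th_achievableb.
by case: excluded_middle_informative.
Qed.

Lemma th_full (T : finType) (e : rel T) : th_achievable e #|T|.
Proof.
exists [set: T], set0, 0; split; last by rewrite cardsT addn0.
exists [::]; split; last by apply/setP=> x; rewrite !inE.
rewrite /is_chron_list /=; apply/negP=> /existsP[v /existsP[w]].
by case/and4P=> _ _; rewrite inE.
Qed.

Lemma bad_ach (T : finType) (e : rel T) : badq e -> exists k, k < #|T| /\ th_achievable e k.
Proof.
move=> [a [b [c [d [Hu Hac Had Hbc Hbd]]]]].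
move: Hu; rewrite /= !inE !negb_or => /and4P [/and3P [Hab Hac' Had'] /andP [Hbc' Hbd'] Hcd _].
set B := [set: T] :\ c :\ d.
have HB : forall x, (x \in B) = (x != d) && (x != c).
  by move=> x; rewrite !inE andbT.
have Bfull : #|T| = #|B| + 2.
  rewrite -cardsT (cardsD1 c) (cardsD1 d ([set: T] :\ c)) !inE eq_sym Hcd.
  by rewrite /= !add1n addn2.
exists (#|B| + 1); split; first by rewrite Bfull ltn_add2l.
exists B, [set x in [:: (a, c); (b, d)]], 1; split; last split => //.
- exists [:: (a, c); (b, d)]; split => //.
  rewrite /is_chron_list /= /can_force.
  rewrite !HB !inE eqxx /= Had' Hac' Hbd' Hbc' /= ?andbF ?orbF ?orbT ?eqxx /= (eq_sym b) (negbTE Hab) (eq_sym d) (negbTE Hcd) /=.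
  apply/and3P; split.
  + apply/forallP => u; apply/implyP => Hu; rewrite HB.
    by apply/andP; split; apply/eqP => E; [move: Had | move: Hac]; rewrite -E Hu.
  + apply/forallP => u; apply/implyP => Hu; rewrite inE HB.
    by apply/orP; right; apply/andP; split; apply/eqP => E; [move: Hbd | move: Hbc]; rewrite -E Hu.
  + apply/negP => /existsP [v /existsP [w /and4P [_ _ Hw _]]].
    by move: Hw; rewrite !inE; case: (w == d); case: (w == c).
- apply/setP => w; rewrite in_setT /= in_setU.
  case Hw: (w \in B) => //=; rewrite in_set Hw /=; apply/existsP.
  move/negbT: Hw; rewrite HB negb_and !negbK => /orP [/eqP -> | /eqP ->].
  + exists b; rewrite !inE eqxx orbT Hbd' Hbc' /=.
    apply/forallP => u; apply/implyP => Hu; rewrite HB.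
    by apply/andP; split; apply/eqP => E; [move: Hbd | move: Hbc]; rewrite -E Hu.
  + exists a; rewrite !inE eqxx Had' Hac' /=.
    apply/forallP => u; apply/implyP => Hu; rewrite HB.
    by apply/andP; split; apply/eqP => E; [move: Had | move: Hac]; rewrite -E Hu.
Qed.

Definition i0 : 'I_4 := @Ordinal 4 0 isT.
Definition i1 : 'I_4 := @Ordinal 4 1 isT.
Definition i2 : 'I_4 := @Ordinal 4 2 isT.
Definition i3 : 'I_4 := @Ordinal 4 3 isT.

Lemma ind_bad (T : finType) (e : rel T) H :
  H i0 i2 = false -> H i0 i3 = false -> H i1 i2 = false -> H i1 i3 = false ->
  has_induced e H -> badq e.
Proof.
move=> h02 h03 h12 h13 [f [Hf He]].
exists (f i0), (f i1), (f i2), (f i3).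
rewrite !He h02 h03 h12 h13 /= !inE !negb_or.
have D : forall i j, val i != val j -> f i != f j.
  by move=> i j Hij; apply/eqP => /Hf E; rewrite E eqxx in Hij.
by rewrite !D.
Qed.

Lemma quad_ind (T : finType) (e : rel T) (a b c d : T) H :
  uniq [:: a; b; c; d] ->
  (forall x y : 'I_4, e (nth a [:: a; b; c; d] x) (nth a [:: a; b; c; d] y) = H x y) ->
  has_induced e H.
Proof.
move=> Hu He; exists (fun i : 'I_4 => nth a [:: a; b; c; d] i); split => // x y.
move=> /eqP; rewrite nth_uniq // => /eqP; exact: val_inj.
Qed.

Lemma bad_ind (T : finType) (e : rel T) (e_sym : symmetric e) (e_irr : irreflexive e) :
  badq e -> has_induced e twoK2 \/ has_induced e K2_coK2 \/ has_induced e coK4.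
Proof.
move=> [a [b [c [d [Hu Hac Had Hbc Hbd]]]]].
have E1 := negbTE Hac; have E2 := negbTE Had; have E3 := negbTE Hbc; have E4 := negbTE Hbd.
have E1' : e c a = false by rewrite e_sym.
have E2' : e d a = false by rewrite e_sym.
have E3' : e c b = false by rewrite e_sym.
have E4' : e d b = false by rewrite e_sym.
have Eba : e b a = e a b by rewrite e_sym.
have Edc : e d c = e c d by rewrite e_sym.
case Hab: (e a b); case Hcd: (e c d).
- left; apply: (quad_ind Hu) => x y.
  case: x => [[|[|[|[|x]]]] Hx] //; case: y => [[|[|[|[|y]]]] Hy] //=;
  by rewrite /twoK2 /= ?e_irr ?E1 ?E2 ?E3 ?E4 ?E1' ?E2' ?E3' ?E4' ?Eba ?Edc ?Hab ?Hcd.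
- right; left; apply: (quad_ind Hu) => x y.
  case: x => [[|[|[|[|x]]]] Hx] //; case: y => [[|[|[|[|y]]]] Hy] //=;
  by rewrite /K2_coK2 /= ?e_irr ?E1 ?E2 ?E3 ?E4 ?E1' ?E2' ?E3' ?E4' ?Eba ?Edc ?Hab ?Hcd.
- right; left.
  have Hu' : uniq [:: c; d; a; b].
    move: Hu; rewrite /= !inE !negb_or => /and4P [/and3P [h1 h2 h3] /andP [h4 h5] h6 _].
    by rewrite h6 (eq_sym c a) h2 (eq_sym c b) h4 (eq_sym d a) h3 (eq_sym d b) h5 h1.
  apply: (quad_ind Hu') => x y.
  case: x => [[|[|[|[|x]]]] Hx] //; case: y => [[|[|[|[|y]]]] Hy] //=;
  by rewrite /K2_coK2 /= ?e_irr ?E1 ?E2 ?E3 ?E4 ?E1' ?E2' ?E3' ?E4' ?Eba ?Edc ?Hab ?Hcd.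
- right; right; apply: (quad_ind Hu) => x y.
  case: x => [[|[|[|[|x]]]] Hx] //; case: y => [[|[|[|[|y]]]] Hy] //=;
  by rewrite /coK4 /= ?e_irr ?E1 ?E2 ?E3 ?E4 ?E1' ?E2' ?E3' ?E4' ?Eba ?Edc ?Hab ?Hcd.
Qed.

Theorem mainTheorem16 (T : finType) (e : rel T)
  (e_sym : symmetric e) (e_irr : irreflexive e) :
  th_H e = #|T| <->
  ~ (has_induced e twoK2 \/ has_induced e K2_coK2 \/ has_induced e coK4).
Proof.
have indbad : (has_induced e twoK2 \/ has_induced e K2_coK2 \/ has_induced e coK4) -> badq e.
  by case=> [|[]]; apply: ind_bad.
split.
- move=> Hth /indbad /bad_ach [k [Hk Ha]].
  by move: (th_le Ha); rewrite Hth leqNgt Hk.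
- move=> Hn.
  have Hb : ~ badq e by move=> /(bad_ind e_sym e_irr).
  apply/eqP; rewrite eqn_leq (th_le (th_full e)) /=.
  have [B [F [t [HF [HU Hk]]]]] := th_ach e.
  rewrite Hk -cardsT -HU; exact: U_card.
Qed.
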